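(* Let $n\ge2$, let $P$ be a partial $n$-Metric on a set $X$, and let $\{x_i\}_{i\in\mathbb{N}}$, $\{y_i\}_{i\in\mathbb{N}}$ be sequences in $X$ forming a Cauchy pair with central distance $r$. Then $\{x_i\}$ and $\{y_i\}$ are both Cauchy sequences with central distance $r$. Moreover, if $a$ is a limit (respectively, a special limit) of $\{x_i\}$, then $a$ is a limit (respectively, a special limit) of $\{y_i\}$.
   Context: Notation: $\langle a\rangle^k$ denotes the $k$-tuple $(a,\dots,a)$ inserted into an argument list. A partial $n$-Metric on $X$ is a function $P:X^n\to\mathbb{R}$ such that for all $x_1,\dots,x_n,a\in X$: (1) $P(\langle x_1\rangle^n)\le P(\langle x_1\rangle^{n-1},x_2)$; (2) $P$ is invariant under permutations of its arguments; (3) $P(\langle x_1\rangle^{n-1},x_2)=P(\langle x_1\rangle^n)$ and $P(\langle x_2\rangle^{n-1},x_1)=P(\langle x_2\rangle^n)$ iff $x_1=x_2$; (4) $P(x_1,\dots,x_n)\le P(x_1,\dots,x_{n-1},a)+P(\langle a\rangle^{n-1},x_n)-P(\langle a\rangle^n)$. Two sequences $\{x_i\},\{y_i\}$ form a Cauchy pair with central distance $r\in\mathbb{R}$ if for every $\epsilon>0$ there is $N$ such that for all $i,j>N$: $r-\epsilon<\min\{P(\langle x_i\rangle^n),P(\langle y_i\rangle^n)\}\le P(\langle x_i\rangle^{n-1},y_j)<r+\epsilon$. A sequence is Cauchy with central distance $r$ if for every $\epsilon>0$ there is $N$ with $|P(x_{i_1},\dots,x_{i_n})-r|<\epsilon$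 for all $i_1,\dots,i_n>N$. A point $a$ is a limit of $\{x_i\}$ iff for every $\epsilon>0$ there is $N$ with $P(\langle a\rangle^{n-1},x_i)-P(\langle a\rangle^n)<\epsilon$ for all $i>N$; a special limit of a Cauchy sequence with central distance $r$ is a limit $a$ with $P(\langle a\rangle^n)=r$. *)

(* Defs.v *)
From Stdlib Require Import Reals List Permutation.
Open Scope R_scope.

(* A function P : X^n -> R is represented as P : list X -> R, only ever
   evaluated on lists of length n. <a>^k is [repeat a k]. *)

Definition partial_nMetric {X : Type} (n : nat) (P : list X -> R) : Prop :=
  (forall x1 x2 : X,
      P (repeat x1 n) <= P (repeat x1 (n - 1) ++ x2 :: nil)) /\
  (forall l l' : list X, length l = n -> Permutation l l' -> P l = P l') /\
  (forall x1 x2 : X,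
      (P (repeat x1 (n - 1) ++ x2 :: nil) = P (repeat x1 n) /\
       P (repeat x2 (n - 1) ++ x1 :: nil) = P (repeat x2 n)) <-> x1 = x2) /\
  (forall (l : list X) (xn a : X), length l = (n - 1)%nat ->
      P (l ++ xn :: nil) <=
      P (l ++ a :: nil) + P (repeat a (n - 1) ++ xn :: nil) - P (repeat a n)).

Definition cauchy_pair {X : Type} (n : nat) (P : list X -> R)
    (x y : nat -> X) (r : R) : Prop :=
  forall eps : R, eps > 0 -> exists N : nat, forall i j : nat,
    (i > N)%nat -> (j > N)%nat ->
    r - eps < Rmin (P (repeat (x i) n)) (P (repeat (y i) n)) /\
    Rmin (P (repeat (x i) n)) (P (repeat (y i) n))
      <= P (repeat (x i) (n - 1) ++ y j :: nil) /\
    P (repeat (x i) (n - 1) ++ y j :: nil) < r + eps.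

(* Cauchy sequence with central distance r: for indices i_1..i_n > N,
   given as f 0, ..., f (n-1). *)
Definition cauchy_seq {X : Type} (n : nat) (P : list X -> R)
    (x : nat -> X) (r : R) : Prop :=
  forall eps : R, eps > 0 -> exists N : nat, forall f : nat -> nat,
    (forall k, (k < n)%nat -> (f k > N)%nat) ->
    Rabs (P (map (fun k => x (f k)) (seq 0 n)) - r) < eps.

Definition is_limit {X : Type} (n : nat) (P : list X -> R)
    (x : nat -> X) (a : X) : Prop :=
  forall eps : R, eps > 0 -> exists N : nat, forall i : nat, (i > N)%nat ->
    P (repeat a (n - 1) ++ x i :: nil) - P (repeat a n) < eps.

Definition is_special_limit {X : Type} (n : nat) (P : list X -> R)
    (x : nat -> X) (r : R) (a : X) : Prop :=
  is_limit n P x a /\ P (repeat a n) = r.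

(* Main.v *)
Require Import Defs.
From Stdlib Require Import Reals List Permutation.
From Stdlib Require Import Lia Lra.
Open Scope R_scope.

Section S.
Variables (X : Type) (n : nat) (P : list X -> R).
Hypothesis Hn : (2 <= n)%nat.
Hypothesis HP : partial_nMetric n P.

Definition dd (a b : X) := P (repeat a (n-1) ++ b :: nil) - P (repeat a n).

Lemma dd_nonneg a b : 0 <= dd a b.
Proof. destruct HP as [H1 _]. unfold dd. specialize (H1 a b). lra. Qed.

Lemma tri a b c : dd a c <= dd a b + dd b c.
Proof.
  destruct HP as [_ [_ [_ H4]]]. unfold dd.
  specialize (H4 (repeat a (n-1)) c b (repeat_length _ _)). lra.
Qed.

Lemma swap1 u v a b : (length u + length v = n - 1)%nat ->
  P (u ++ b :: v) <= P (u ++ a :: v) + dd a b.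
Proof.
  intros Hl. destruct HP as [_ [Hp [_ H4]]].
  assert (E : forall z, P (u ++ z :: v) = P ((u ++ v) ++ z :: nil)).
  { intros z. apply Hp.
    - rewrite length_app; simpl; lia.
    - eapply Permutation_trans. apply Permutation_sym, Permutation_middle.
      apply Permutation_cons_append. }
  rewrite !E. unfold dd.
  specialize (H4 (u ++ v) b a). rewrite length_app in H4. specialize (H4 Hl). lra.
Qed.

Lemma rep_snoc (m : X) k u : repeat m k ++ m :: u = repeat m (S k) ++ u.
Proof. induction k; simpl; [reflexivity| now rewrite IHk]. Qed.

Lemma upper m D u : forall k, (k + length u = n)%nat ->
  Forall (fun s => dd m s <= D) u ->
  P (repeat m k ++ u) <= P (repeat m n) + INR (length u) * D.
Proof.
  induction u as [|s u IH]; intros k Hk HF.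
  - simpl in *. rewrite app_nil_r. replace k with n by lia. lra.
  - inversion HF; subst. simpl length. rewrite S_INR.
    pose proof (swap1 (repeat m k) u m s) as Hs.
    rewrite repeat_length in Hs. simpl in Hk. specialize (Hs ltac:(lia)).
    rewrite rep_snoc in Hs. specialize (IH (S k) ltac:(lia) H2). lra.
Qed.

Lemma lower m D u : forall k, (k + length u = n)%nat ->
  Forall (fun s => dd s m <= D) u ->
  P (repeat m n) <= P (repeat m k ++ u) + INR (length u) * D.
Proof.
  induction u as [|s u IH]; intros k Hk HF.
  - simpl in *. rewrite app_nil_r. replace k with n by lia. lra.
  - inversion HF; subst. simpl length. rewrite S_INR.
    pose proof (swap1 (repeat m k) u s m) as Hs.
    rewrite repeat_length in Hs. simpl in Hk. specialize (Hs ltac:(lia)).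
    rewrite rep_snoc in Hs. specialize (IH (S k) ltac:(lia) H2). lra.
Qed.

Lemma rev_bound a b :
  P (repeat b (n-1) ++ a :: nil) <= P (repeat a n) + INR n * dd a b.
Proof.
  destruct HP as [_ [Hp _]].
  rewrite (Hp _ (repeat a 1 ++ repeat b (n-1))).
  - eapply Rle_trans. apply (upper a (dd a b) (repeat b (n-1)) 1).
    + rewrite repeat_length; lia.
    + apply Forall_forall. intros s Hs. apply repeat_spec in Hs. subst. lra.
    + rewrite repeat_length. apply Rplus_le_compat_l.
      apply Rmult_le_compat_r. apply dd_nonneg. apply le_INR. lia.
  - rewrite length_app, repeat_length. simpl. lia.
  - simpl. apply Permutation_sym, Permutation_cons_append.
Qed.

Definition CC := 2 * INR n + 4.

Lemma pair_facts (x y : nat -> X) r e N : 0 < e ->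
  (forall i j : nat, (i > N)%nat -> (j > N)%nat ->
    r - e < Rmin (P (repeat (x i) n)) (P (repeat (y i) n)) /\
    Rmin (P (repeat (x i) n)) (P (repeat (y i) n))
      <= P (repeat (x i) (n - 1) ++ y j :: nil) /\
    P (repeat (x i) (n - 1) ++ y j :: nil) < r + e) ->
  forall i j, (i > N)%nat -> (j > N)%nat ->
  dd (x i) (x j) < CC * e /\ dd (x i) (y j) < CC * e /\
  dd (y i) (x j) < CC * e /\ dd (y i) (y j) < CC * e /\
  r - e < P (repeat (x i) n) < r + CC * e /\
  r - e < P (repeat (y i) n) < r + CC * e.
Proof.
  intros He H.
  assert (nn := pos_INR n). unfold CC.
  assert (Fx : forall i, (i > N)%nat -> r - e < P (repeat (x i) n)).
  { intros i Hi. destruct (H i i Hi Hi) as [A _].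
    pose proof (Rmin_l (P (repeat (x i) n)) (P (repeat (y i) n))). lra. }
  assert (Fy : forall i, (i > N)%nat -> r - e < P (repeat (y i) n)).
  { intros i Hi. destruct (H i i Hi Hi) as [A _].
    pose proof (Rmin_r (P (repeat (x i) n)) (P (repeat (y i) n))). lra. }
  assert (F3 : forall i j, (i > N)%nat -> (j > N)%nat ->
     P (repeat (x i) (n - 1) ++ y j :: nil) < r + e).
  { intros i j Hi Hj. apply (H i j Hi Hj). }
  assert (F4 : forall i j, (i > N)%nat -> (j > N)%nat -> dd (x i) (y j) < 2 * e).
  { intros i j Hi Hj. unfold dd. specialize (F3 i j Hi Hj). specialize (Fx i Hi). lra. }
  assert (Pxu : forall i, (i > N)%nat -> P (repeat (x i) n) < r + e).
  { intros i Hi. pose proof (dd_nonneg (x i) (y i)). unfold dd in H0.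
    specialize (F3 i i Hi Hi). lra. }
  assert (F5 : forall i j, (i > N)%nat -> (j > N)%nat ->
     P (repeat (y j) (n - 1) ++ x i :: nil) < r + e + INR n * (2 * e)).
  { intros i j Hi Hj. pose proof (rev_bound (x i) (y j)).
    pose proof (F4 i j Hi Hj). pose proof (Pxu i Hi).
    assert (INR n * dd (x i) (y j) <= INR n * (2 * e)).
    { apply Rmult_le_compat_l; lra. } lra. }
  assert (F6 : forall i j, (i > N)%nat -> (j > N)%nat ->
     dd (y j) (x i) < (2 * INR n + 2) * e).
  { intros i j Hi Hj. unfold dd. specialize (F5 i j Hi Hj). specialize (Fy j Hj). lra. }
  assert (HN : (S N > N)%nat) by lia.
  intros i j Hi Hj.
  pose proof (F4 i j Hi Hj). pose proof (F6 j i Hj Hi).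
  pose proof (tri (x i) (y (S N)) (x j)). pose proof (F4 i _ Hi HN). pose proof (F6 j _ Hj HN).
  pose proof (tri (y i) (x (S N)) (y j)). pose proof (F6 _ i HN Hi). pose proof (F4 _ j HN Hj).
  pose proof (Fx i Hi). pose proof (Fy i Hi). pose proof (Pxu i Hi).
  pose proof (F5 i i Hi Hi). pose proof (dd_nonneg (y i) (x i)). unfold dd in H12.
  repeat split; nra.
Qed.

Lemma cs_from (z : nat -> X) r e N m : 0 < e -> (m > N)%nat ->
  (forall i j, (i > N)%nat -> (j > N)%nat -> dd (z i) (z j) < CC * e) ->
  r - e < P (repeat (z m) n) < r + CC * e ->
  forall f : nat -> nat, (forall k, (k < n)%nat -> (f k > N)%nat) ->
  Rabs (P (map (fun k => z (f k)) (seq 0 n)) - r) < (INR n + 1) * CC * e.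
Proof.
  intros He Hm Hd Hzm f Hf.
  set (u := map (fun k => z (f k)) (seq 0 n)).
  assert (Hl : length u = n) by (unfold u; now rewrite length_map, length_seq).
  assert (Hin : forall s, In s u -> exists i, (i > N)%nat /\ s = z i).
  { intros s Hs. unfold u in Hs. apply in_map_iff in Hs as [k [<- Hk]].
    apply in_seq in Hk. exists (f k). split; [apply Hf; lia| reflexivity]. }
  pose proof (upper (z m) (CC * e) u 0 ltac:(lia)) as U.
  pose proof (lower (z m) (CC * e) u 0 ltac:(lia)) as L.
  simpl in U, L. rewrite Hl in U, L.
  assert (FU : Forall (fun s => dd (z m) s <= CC * e) u).
  { apply Forall_forall. intros s Hs. destruct (Hin s Hs) as [i [Hi ->]].
    left. apply Hd; lia. }
  assert (FL : Forall (fun s => dd s (z m) <= CC * e) u).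
  { apply Forall_forall. intros s Hs. destruct (Hin s Hs) as [i [Hi ->]].
    left. apply Hd; lia. }
  specialize (U FU). specialize (L FL).
  assert (nn := pos_INR n). unfold CC in *.
  apply Rabs_def1; nra.
Qed.

End S.

Theorem lemma4p19 (X : Type) (n : nat) (P : list X -> R)
    (x y : nat -> X) (r : R) :
  (2 <= n)%nat ->
  partial_nMetric n P ->
  cauchy_pair n P x y r ->
  cauchy_seq n P x r /\ cauchy_seq n P y r /\
  (forall a : X, is_limit n P x a -> is_limit n P y a) /\
  (forall a : X, is_special_limit n P x r a -> is_special_limit n P y r a).
Proof.
  intros Hn HP Hc.
  assert (nn := pos_INR n).
  assert (CCp : 0 < CC n) by (unfold CC; lra).
  set (K := (INR n + 1) * CC n).
  assert (Kp : 0 < K) by (unfold K; nra).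
  assert (Hlim : forall a, is_limit n P x a -> is_limit n P y a).
  { intros a Ha eps Heps.
    set (e := eps / (2 * CC n)).
    assert (He : 0 < e) by (unfold e; apply Rdiv_lt_0_compat; lra).
    destruct (Hc e He) as [N HN].
    destruct (Ha (eps / 2) ltac:(lra)) as [N1 HN1].
    exists N. intros i Hi.
    set (j := S (Nat.max N N1)).
    pose proof (pair_facts X n P Hn HP x y r e N He HN j i ltac:(lia) Hi) as F.
    destruct F as [_ [F _]].
    pose proof (tri X n P HP a (x j) (y i)).
    specialize (HN1 j ltac:(lia)).
    assert (CC n * e = eps / 2) by (unfold e; field; lra).
    unfold dd in *. lra. }
  split; [|split; [|split]].
  - intros eps Heps. set (e := eps / K).
    assert (He : 0 < e) by (unfold e; apply Rdiv_lt_0_compat; lra).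
    destruct (Hc e He) as [N HN]. exists N.
    intros f Hf.
    assert (Hm : (S N > N)%nat) by lia.
    pose proof (pair_facts X n P Hn HP x y r e N He HN) as F.
    assert (K * e = eps) by (unfold e; field; lra).
    replace eps with ((INR n + 1) * CC n * e) by (rewrite <- H; unfold K; ring).
    apply (cs_from X n P Hn HP x r e N (S N) He Hm); auto.
    + intros i j Hi Hj. apply (F i j Hi Hj).
    + apply (F (S N) (S N) Hm Hm).
  - intros eps Heps. set (e := eps / K).
    assert (He : 0 < e) by (unfold e; apply Rdiv_lt_0_compat; lra).
    destruct (Hc e He) as [N HN]. exists N.
    intros f Hf.
    assert (Hm : (S N > N)%nat) by lia.
    pose proof (pair_facts X n P Hn HP x y r e N He HN) as F.
    assert (K * e = eps) by (unfold e; field; lra).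
    replace eps with ((INR n + 1) * CC n * e) by (rewrite <- H; unfold K; ring).
    apply (cs_from X n P Hn HP y r e N (S N) He Hm); auto.
    + intros i j Hi Hj. apply (F i j Hi Hj).
    + apply (F (S N) (S N) Hm Hm).
  - exact Hlim.
  - intros a [Ha Hr]. split; auto.
Qed.
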